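(* Let $n\ge1$, $X=\{1,\dots,n\}$, $\mathcal{A}$ the algebra of all functions $X\to\mathbb{R}$ with pointwise operations, $\sigma:X\to X$ a bijection and $\tilde{\sigma}(f)=f\circ\sigma^{-1}$. The center of the skew power series ring $\mathcal{A}[[x;\tilde{\sigma}]]$ is $$Z(\mathcal{A}[[x;\tilde{\sigma}]])=\Big\{\sum_{n=0}^{\infty} f_nx^n : f_n\in\mathcal{A},\ f_n=0\text{ on } Sep^n(X)\text{ and }\tilde{\sigma}(f_n)=f_n\text{ for all } n\ge0\Big\}.$$
   Context: The skew power series ring $\mathcal{A}[[x;\tilde{\sigma}]]$ is the set of formal series $\sum_{n=0}^\infty f_nx^n$, $f_n\in\mathcal{A}$, with coefficientwise addition and multiplication $\big(\sum_n f_nx^n\big)\big(\sum_n g_nx^n\big)=\sum_{n}\big(\sum_{k=0}^n f_k\,\tilde{\sigma}^k(g_{n-k})\big)x^n$ (so $xf=\tilde{\sigma}(f)x$). For an integer $n$, $Sep^n(X)=\{p\in X:\sigma^n(p)\neq p\}$ (so $Sep^0(X)=\emptyset$). *)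

(* Defs.v *)
From HB Require Import structures.
From mathcomp Require Import all_boot all_order all_algebra all_fingroup.
From mathcomp Require Import reals.
Set Implicit Arguments. Unset Strict Implicit. Unset Printing Implicit Defensive.
Import GRing.Theory.
Local Open Scope ring_scope.

Definition tsig (R : realType) (n : nat) (sigma : {perm 'I_n})
  (f : 'I_n -> R) : 'I_n -> R := fun p => f ((sigma^-1)%g p).

Definition skewps (R : realType) (n : nat) := nat -> 'I_n -> R.

(* (sum f_k x^k)(sum g_k x^k) = sum_m (sum_{k<=m} f_k tsig^k(g_{m-k})) x^m *)
Definition skew_mul (R : realType) (n : nat) (sigma : {perm 'I_n})
  (f g : skewps R n) : skewps R n :=
  fun m p => \sum_(k < m.+1) f k p * (iter k (tsig sigma) (g (m - k)%N)) p.

Definition in_center (R : realType) (n : nat) (sigma : {perm 'I_n})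
  (f : skewps R n) : Prop :=
  forall g : skewps R n, skew_mul sigma f g = skew_mul sigma g f.

Definition Sep (n : nat) (sigma : {perm 'I_n}) (m : nat) : pred 'I_n :=
  fun p => (sigma ^+ m)%g p != p.

(* Main.v *)
Require Import Defs.
From HB Require Import structures.
From mathcomp Require Import all_boot all_order all_algebra all_fingroup.
From mathcomp Require Import reals.
From mathcomp Require Import zify.
From Stdlib Require Import FunctionalExtensionality.
Local Open Scope ring_scope.
Import GRing.Theory.

Lemma iter_tsig (R : realType) (n : nat) (sigma : {perm 'I_n}) k (g : 'I_n -> R) p :
  iter k (tsig sigma) g p = g (((sigma ^+ k)^-1)%g p).
Proof.
elim: k p => [|k IH] p /=; first by rewrite expg0 invg1 perm1.
by rewrite /tsig IH expgSr invMg permM.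
Qed.

Definition delta {R : realType} {n : nat} (j : nat) (h : 'I_n -> R) : skewps R n :=
  fun i => if i == j then h else (fun _ => 0).

Lemma mul_delta_r (R : realType) (n : nat) (sigma : {perm 'I_n}) (f : skewps R n) (j : nat) h (k : nat) p :
  skew_mul sigma f (delta j h) (k + j)%N p = f k p * h (((sigma ^+ k)^-1)%g p).
Proof.
have hk : (k < (k + j)%N.+1)%N by rewrite ltnS leq_addr.
rewrite /skew_mul (bigD1 (Ordinal hk)) //= big1 ?addr0.
  by rewrite iter_tsig /delta addKn eqxx.
move=> i /eqP ne; rewrite iter_tsig /delta.
case: eqP => [e|]; last by rewrite mulr0.
exfalso; apply: ne; apply: val_inj => /=. have := ltn_ord i. move: e. lia.
Qed.

Lemma mul_delta_l (R : realType) (n : nat) (sigma : {perm 'I_n}) (f : skewps R n) (j : nat) h (k : nat) p :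
  skew_mul sigma (delta j h) f (k + j)%N p = h p * f k (((sigma ^+ j)^-1)%g p).
Proof.
have hj : (j < (k + j)%N.+1)%N by rewrite ltnS leq_addl.
rewrite /skew_mul (bigD1 (Ordinal hj)) //= big1 ?addr0.
  by rewrite iter_tsig /delta addnK eqxx.
move=> i /eqP ne; rewrite /delta.
case: eqP => [e|]; last by rewrite mul0r.
exfalso; apply: ne; apply: val_inj => /=. done.
Qed.

Theorem theorem11 (R : realType) (n : nat) (hn : (1 <= n)%N)
  (sigma : {perm 'I_n}) (f : skewps R n) :
  in_center sigma f <->
  (forall m : nat,
     (forall p : 'I_n, p \in Sep sigma m -> f m p = 0) /\
     tsig sigma (f m) = f m).
Proof.
split.
- move=> H m; split.
  + move=> p hp.
    have := congr1 (fun F => F (m + 0)%N p)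
      (H (delta 0 (fun q => if q == (((sigma ^+ m)^-1)%g p) then 1 else 0))).
    rewrite /= mul_delta_r mul_delta_l eqxx mulr1.
    case: eqP => [e|_]; last by rewrite mul0r.
    move: hp; rewrite /Sep unfold_in /= => /eqP[].
    by rewrite {1}e permKV.
  + apply: functional_extensionality => p.
    have := congr1 (fun F => F (m + 1)%N p) (H (delta 1 (fun _ => 1))).
    by rewrite /= mul_delta_r mul_delta_l mulr1 mul1r expg1 /tsig => ->.
- move=> H g; apply: functional_extensionality => m;
  apply: functional_extensionality => p.
  have inv : forall k i q, f k (((sigma ^+ i)^-1)%g q) = f k q.
    move=> k i q; rewrite -iter_tsig; congr (_ q).
    elim: i => [|i IH] //=; by rewrite IH (proj2 (H k)).
  rewrite /skew_mul.
  transitivity (\sum_(i < m.+1) f i p * g (m - i)%N p).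
    apply: eq_bigr => i _; rewrite iter_tsig.
    have [->|nz] := eqVneq (f i p) 0; first by rewrite !mul0r.
    have fx : (sigma ^+ i)%g p = p.
      apply/eqP; apply: contraNT nz => hs; apply/eqP; apply: (proj1 (H i)).
      by rewrite /Sep unfold_in.
    have e2 : ((sigma ^+ i)^-1)%g p = p by rewrite -{1}fx permK.
    by rewrite e2.
  transitivity (\sum_(i < m.+1) g i p * f (m - i)%N p); last first.
    by apply: eq_bigr => i _; rewrite iter_tsig inv.
  rewrite (reindex_inj rev_ord_inj) /=; apply: eq_bigr => i _.
  rewrite subSS subKn; first exact: mulrC.
  by rewrite -ltnS.
Qed.
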